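(* Suppose $M$ is a matroid. If $\mathrm{si}(M)$ is rigid, then $M$ is rigid.
   Context: $\mathrm{si}(M)$, the simplification of $M$, is the matroid obtained from $M$ by deleting all loops and restricting to one element from each parallel class. For a matroid $N$ on a finite set $E$ of rank $d$: a valuation of $N$ is a function $\nu:\binom{E}{d}\to\mathbb{R}\cup\{\infty\}$ satisfying (V1) $\nu(B)<\infty$ for some $B$, (V2) for all $d$-sets $B,B'$ and $i\in B\setminus B'$ there is $j\in B'\setminus B$ with $\nu(B)+\nu(B')\ge\nu(B-i+j)+\nu(B'+i-j)$ (where $B-i+j:=(B\cup\{j\})\setminus\{i\}$), and such that $\{B:\nu(B)<\infty\}$ is exactly the set of bases of $N$. A valuation $\nu$ is trivial if there is $\alpha\in\mathbb{R}^E$ with $\nu(B)=\sum_{i\in B}\alpha_i$ for all bases $B$ of $N$. $N$ is rigid if all valuations of $N$ are trivial. *)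

(* Defs.v *)
From HB Require Import structures.
From mathcomp Require Import all_boot all_order all_algebra.
From mathcomp Require Import Rstruct.
From Stdlib Require Import Reals.
Set Implicit Arguments. Unset Strict Implicit. Unset Printing Implicit Defensive.
Import Order.TTheory GRing.Theory Num.Theory.
Local Open Scope ring_scope.

Section Matroids.
Variable E : finType.

Definition is_matroid (G : {set E}) (bases : {set {set E}}) : Prop :=
  [/\ forall B, B \in bases -> B \subset G,
      bases != set0 &
      forall B1 B2, B1 \in bases -> B2 \in bases ->
        forall x, x \in B1 :\: B2 ->
          exists2 y, y \in B2 :\: B1 & (B1 :\ x :|: [set y]) \in bases].

Definition indep (bases : {set {set E}}) (I : {set E}) : bool :=
  [exists B in bases, I \subset B].

(* rank of the matroid (all bases have this cardinality) *)
Definition mrank (bases : {set {set E}}) : nat := \max_(B in bases) #|B|.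

Definition is_loop (G : {set E}) (bases : {set {set E}}) (x : E) : bool :=
  (x \in G) && ~~ indep bases [set x].

(* x and y are equal or parallel (for non-loops x, y of the matroid) *)
Definition par_or_eq (bases : {set {set E}}) (x y : E) : bool :=
  (x == y) || ~~ indep bases [set x; y].

Definition restr_bases (bases : {set {set E}}) (S : {set E}) : {set {set E}} :=
  [set I : {set E} | [&& I \subset S, indep bases I &
                       [forall x in S :\: I, ~~ indep bases (x |: I)]]].

(* [S] is the ground set of a simplification of M = (G, bases): S consists
   of non-loops of M and contains exactly one element from each parallel
   class (the parallel classes being the classes of [par_or_eq] on the
   non-loops). si(M) is then the restriction M|S. *)
Definition simplification_set (G : {set E}) (bases : {set {set E}})
  (S : {set E}) : Prop :=
  [/\ S \subset G,
      forall x, x \in S -> ~~ is_loop G bases x,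
      forall x, x \in G -> ~~ is_loop G bases x ->
         exists2 y, y \in S & par_or_eq bases x y &
      forall x y, x \in S -> y \in S -> par_or_eq bases x y -> x = y].

(* Extended reals R ∪ {∞}: [None] is ∞. *)
Definition xadd (a b : option R) : option R :=
  match a, b with Some x, Some y => Some (x + y) | _, _ => None end.
Definition xle (a b : option R) : bool :=
  match a, b with
  | _, None => true
  | None, Some _ => false
  | Some x, Some y => x <= y
  end.

Definition dset (G : {set E}) (d : nat) (B : {set E}) : bool :=
  (B \subset G) && (#|B| == d).

Definition valuation (G : {set E}) (bases : {set {set E}})
  (nu : {set E} -> option R) : Prop :=
  let d := mrank bases in
  [/\ exists2 B, dset G d B & nu B != None,
      (* V2 *) forall B B', dset G d B -> dset G d B' ->
         forall i, i \in B :\: B' ->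
         exists2 j, j \in B' :\: B &
           xle (xadd (nu (B :\ i :|: [set j])) (nu (B' :\ j :|: [set i])))
               (xadd (nu B) (nu B')) &
      forall B, dset G d B -> (nu B != None) = (B \in bases)].

Definition trivial_valuation (bases : {set {set E}}) (nu : {set E} -> option R)
  : Prop :=
  exists alpha : E -> R, forall B, B \in bases -> nu B = Some (\sum_(i in B) alpha i).

Definition rigid (G : {set E}) (bases : {set {set E}}) : Prop :=
  forall nu, valuation G bases nu -> trivial_valuation bases nu.

End Matroids.

(* Main.v *)
Require Import Defs.
From Stdlib Require Import Reals.
From mathcomp Require Import all_boot all_order all_algebra.
From mathcomp Require Import Rstruct lra.
Set Implicit Arguments. Unset Strict Implicit. Unset Printing Implicit Defensive.
Import Order.TTheory GRing.Theory Num.Theory.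

Lemma card_swap (E : finType) (A : {set E}) x y :
  x \in A -> y \notin A -> #|A :\ x :|: [set y]| = #|A|.
Proof.
move=> xA yA.
rewrite setUC cardsU1 in_setD1 (negbTE yA) andbF /=.
by rewrite [RHS](cardsD1 x) xA.
Qed.

Lemma swap_diff (E : finType) (A T : {set E}) x y :
  y \in T -> (A :\ x :|: [set y]) :\: T = (A :\: T) :\ x.
Proof.
move=> yT; apply/setP=> z; rewrite !inE.
have [->|zy] := eqVneq z y; first by rewrite yT !andbF.
by rewrite orbF; case: (z \in T); case: (z \in A); case: (z == x).
Qed.

Lemma swap_back (E : finType) (A : {set E}) x y :
  x \in A -> y \notin A -> (A :\ x :|: [set y]) :\ y :|: [set x] = A.
Proof.
move=> xA yA; apply/setP=> z; rewrite !inE.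
have [->|zx] := eqVneq z x; first by rewrite orbT xA.
have [->|zy] := eqVneq z y; first by rewrite (negbTE yA).
by rewrite /= orbF orbF.
Qed.

Lemma bases_card (E : finType) (G : {set E}) (bases : {set {set E}}) :
  is_matroid G bases -> forall B1 B2, B1 \in bases -> B2 \in bases -> #|B1| = #|B2|.
Proof.
case=> _ _ Hex.
suff H : forall n B1 B2, B1 \in bases -> B2 \in bases -> (#|B1 :\: B2| <= n)%N -> #|B1| = #|B2|.
  by move=> B1 B2 h1 h2; apply: (H _ _ _ h1 h2 (leqnn _)).
elim=> [|n IH] B1 B2 h1 h2 hn.
  have sub : B1 \subset B2.
    by rewrite -setD_eq0 -cards_eq0 -leqn0.
  case: (boolP (B2 \subset B1)) => [s2|].
    by have -> : B1 = B2 by apply/eqP; rewrite eqEsubset sub s2.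
  case/subsetPn=> z z2 z1.
  have zin : z \in B2 :\: B1 by rewrite inE z1 z2.
  case: (Hex _ _ h2 h1 z zin) => y yin _.
  have e : B1 :\: B2 = set0 by apply/eqP; rewrite setD_eq0.
  by move: yin; rewrite e inE.
case: (set_0Vmem (B1 :\: B2)) => [e|[x xin]].
  by apply: (IH _ _ h1 h2); rewrite e cards0.
case: (Hex _ _ h1 h2 x xin) => y yin h1'.
move: xin yin; rewrite !inE => /andP[x2 x1] /andP[y1 y2].
rewrite -(card_swap x1 y1).
apply: (IH _ _ h1' h2).
rewrite -ltnS (leq_trans _ hn) // swap_diff // [X in (_ < X)%N](cardsD1 x) inE x1 x2.
by [].
Qed.

Lemma mrank_card (E : finType) (G : {set E}) (bases : {set {set E}}) :
  is_matroid G bases -> forall B, B \in bases -> mrank bases = #|B|.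
Proof.
move=> M B hB; apply/eqP; rewrite eqn_leq; apply/andP; split.
  by apply/bigmax_leqP => B' hB'; rewrite (bases_card M hB' hB).
by rewrite /mrank; apply: (@leq_bigmax_cond _ (fun B => B \in bases) (fun B => #|B|)) hB.
Qed.

Lemma indep_card (E : finType) (G : {set E}) (bases : {set {set E}}) I :
  is_matroid G bases -> indep bases I -> (#|I| <= mrank bases)%N.
Proof.
move=> M /existsP [B /andP [hB sub]]; rewrite (mrank_card M hB).
exact: subset_leq_card.
Qed.

Lemma basis_dset (E : finType) (G : {set E}) (bases : {set {set E}}) B :
  is_matroid G bases -> B \in bases -> dset G (mrank bases) B.
Proof.
move=> M hB; rewrite /dset (mrank_card M hB) eqxx andbT.
by case: M => h _ _; apply: h.
Qed.

Lemma pair_not_basis (E : finType) (bases : {set {set E}}) (B : {set E}) x y :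
  ~~ indep bases [set x; y] -> x \in B -> y \in B -> B \notin bases.
Proof.
move=> hi xB yB; apply/negP => hB; move/negP: hi; apply.
apply/existsP; exists B; rewrite hB /=.
by apply/subsetP => z; rewrite !inE => /orP [] /eqP ->.
Qed.

Lemma xle_fin (a b : option R) u v :
  xle (xadd a b) (xadd (Some u) (Some v)) -> a <> None /\ b <> None.
Proof. by case: a; case: b. Qed.

Lemma val_fin (E : finType) (G : {set E}) (bases : {set {set E}}) nu B :
  is_matroid G bases -> valuation G bases nu -> B \in bases -> exists r, nu B = Some r.
Proof.
move=> M [_ _ Vs] hB.
have := Vs B (basis_dset M hB); rewrite hB.
by case: (nu B) => // r _; exists r.
Qed.

Lemma exch_forced (E : finType) (G : {set E}) (bases : {set {set E}}) nu A Bb x y :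
  is_matroid G bases -> valuation G bases nu ->
  A \in bases -> y \in A -> Bb \in bases -> x \in Bb -> y \notin Bb -> y \in G ->
  ~~ indep bases [set x; y] ->
  xle (xadd (nu (A :\ y :|: [set x])) (nu (Bb :\ x :|: [set y]))) (xadd (nu A) (nu Bb)).
Proof.
move=> M Hv hA yA hB xB yB yG hi.
have [_ V2 Vs] := Hv.
have yin : y \in A :\: Bb by rewrite inE yA yB.
case: (V2 A Bb (basis_dset M hA) (basis_dset M hB) y yin) => j jin hle.
have [u eu] := val_fin M Hv hA; have [v ev] := val_fin M Hv hB.
move: (hle); rewrite eu ev => /xle_fin [_ h2].
move: jin; rewrite inE => /andP [jA jB].
have dj : dset G (mrank bases) (Bb :\ j :|: [set y]).
  rewrite /dset subUset sub1set yG card_swap // (mrank_card M hB) eqxx andbT /=.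
  rewrite andbT; apply: (subset_trans (subsetDl Bb [set j])).
  by case: M => h _ _; apply: h.
have hj : Bb :\ j :|: [set y] \in bases by rewrite -(Vs _ dj); apply/eqP.
have [ejx|njx] := eqVneq j x; first by move: hle; rewrite ejx eu ev.
have xB2 : x \in Bb :\ j :|: [set y] by rewrite !inE eq_sym njx xB.
have yB2 : y \in Bb :\ j :|: [set y] by rewrite !inE eqxx orbT.
by rewrite (negbTE (pair_not_basis hi xB2 yB2)) in hj.
Qed.

Lemma swap_measure (E : finType) (B S : {set E}) x y :
  x \in B -> x \notin S -> y \in S ->
  (#|(B :\ x :|: [set y]) :\: S|.+1 = #|B :\: S|)%N.
Proof.
move=> xB xS yS.
by rewrite swap_diff // [RHS](cardsD1 x) inE xS xB.
Qed.

Lemma swap_dset (E : finType) (G : {set E}) (bases : {set {set E}}) B x y :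
  is_matroid G bases -> B \in bases -> x \in B -> y \notin B -> y \in G ->
  dset G (mrank bases) (B :\ x :|: [set y]).
Proof.
move=> M hB xB yB yG.
rewrite /dset subUset sub1set yG card_swap // (mrank_card M hB) eqxx !andbT /=.
apply: (subset_trans (subsetDl B [set x])).
by case: M => h _ _; apply: h.
Qed.

Local Open Scope ring_scope.

Theorem mainTheorem20 (E : finType) (G : {set E}) (bases : {set {set E}})
  (S : {set E}) :
  is_matroid G bases ->
  simplification_set G bases S ->
  rigid S (restr_bases bases S) ->
  rigid G bases.
Proof.
move=> M [SG Snl Spar Suniq] Rig nu Hv.
have [V1 V2 Vs] := Hv.
have BG : forall B, B \in bases -> B \subset G by case: M.
have ind1 : forall B x, B \in bases -> x \in B -> indep bases [set x].
  by move=> B x hB xB; apply/existsP; exists B; rewrite hB sub1set.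
have swap_ok : forall B x y, B \in bases -> x \in B -> y \in S ->
    ~~ indep bases [set x; y] -> y \notin B /\ B :\ x :|: [set y] \in bases.
  move=> B x y hB xB yS hi.
  have yB : y \notin B.
    apply: contraNN hi => yB; apply/existsP; exists B; rewrite hB /=.
    by apply/subsetP => z; rewrite !inE => /orP [] /eqP ->.
  split => //.
  have yG : y \in G := subsetP SG y yS.
  have : indep bases [set y].
    by have := Snl y yS; rewrite /is_loop yG /= negbK.
  case/existsP => A /andP [hA]; rewrite sub1set => yA.
  have := exch_forced M Hv hA yA hB xB yB yG hi.
  have [u eu] := val_fin M Hv hA; have [v ev] := val_fin M Hv hB.
  rewrite eu ev => /xle_fin [_ h2].
  by rewrite -(Vs _ (swap_dset M hB xB yB yG)); apply/eqP.
pose p x := odflt x [pick y in S | ~~ indep bases [set x; y]].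
have p_spec : forall B x, B \in bases -> x \in B -> x \notin S ->
    p x \in S /\ ~~ indep bases [set x; p x].
  move=> B x hB xB xS.
  have xG : x \in G := subsetP (BG B hB) x xB.
  have nl : ~~ is_loop G bases x by rewrite /is_loop xG (ind1 B x hB xB).
  case: (Spar x xG nl) => y yS pxy.
  have nxy : x != y by apply: contraNneq xS => ->.
  have hi : ~~ indep bases [set x; y] by move: pxy; rewrite /par_or_eq (negbTE nxy).
  rewrite /p; case: pickP => [z /andP [zS hz] | none] //=.
  by have := none y; rewrite yS hi.
have existsS : forall n B, B \in bases -> (#|B :\: S| <= n)%N ->
    exists2 B', B' \in bases & B' \subset S.
  elim=> [|n IH] B hB hn.
    by exists B => //; rewrite -setD_eq0 -cards_eq0 -leqn0.
  case: (set_0Vmem (B :\: S)) => [e|[x]].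
    by exists B => //; rewrite -setD_eq0 e.
  rewrite inE => /andP [xS xB].
  have [pS hi] := p_spec B x hB xB xS.
  have [yB hB'] := swap_ok B x (p x) hB xB pS hi.
  apply: (IH _ hB'); rewrite -ltnS swap_measure //.
have [B0 hB0 B0S] : exists2 B', B' \in bases & B' \subset S.
  case: M => _ ne _; case: (set_0Vmem bases) => [e|[B hB]].
    by rewrite e eqxx in ne.
  exact: (existsS _ B hB (leqnn _)).
have in_restr : forall B, B \in bases -> B \subset S -> B \in restr_bases bases S.
  move=> B hB BS; rewrite inE BS /=; apply/andP; split.
    by apply/existsP; exists B; rewrite hB subxx.
  apply/forallP => z; apply/implyP; rewrite inE => /andP [zB zS].
  apply/negP => /(indep_card M); rewrite (mrank_card M hB) cardsU1 zB /=.
  by rewrite add1n ltnn.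
have restr_out : forall B, B \in restr_bases bases S -> #|B| = mrank bases -> B \in bases.
  move=> B; rewrite inE => /and3P [_ /existsP [B1 /andP [hB1 sub]] _] cB.
  rewrite (mrank_card M hB1) in cB.
  suff -> : B = B1 by [].
  by apply/eqP; rewrite eqEcard sub cB leqnn.
have drank : mrank (restr_bases bases S) = mrank bases.
  apply/eqP; rewrite eqn_leq; apply/andP; split.
    rewrite /mrank; apply/bigmax_leqP => I; rewrite inE => /and3P [_ hI _].
    exact: indep_card M hI.
  rewrite (mrank_card M hB0) /mrank.
  apply: (@leq_bigmax_cond _ (fun B => B \in restr_bases bases S) (fun B => #|B|)).
  exact: in_restr.
have Hv' : valuation S (restr_bases bases S) nu.
  rewrite /valuation drank; split.
  - exists B0; first by rewrite /dset B0S (mrank_card M hB0) eqxx.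
    by rewrite (Vs _ (basis_dset M hB0)).
  - move=> B B' /andP [BS cB] /andP [B'S cB']; apply: V2.
      by rewrite /dset (subset_trans BS SG) cB.
    by rewrite /dset (subset_trans B'S SG) cB'.
  - move=> B /andP [BS cB].
    have dB : dset G (mrank bases) B by rewrite /dset (subset_trans BS SG) cB.
    rewrite (Vs B dB); apply/idP/idP => h.
      exact: in_restr h BS.
    exact: restr_out h (eqP cB).
have [alpha' Ha'] := Rig nu Hv'.
pose Bx x := odflt set0 [pick B in bases | x \in B].
pose fin (o : option R) := odflt 0 o.
pose alpha z := if z \in S then alpha' z
  else alpha' (p z) + fin (nu (Bx z)) - fin (nu (Bx z :\ z :|: [set p z])).
have baseS : forall B, B \in bases -> B \subset S -> nu B = Some (\sum_(i in B) alpha i).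
  move=> B hB BS; rewrite (Ha' B (in_restr B hB BS)); congr Some.
  by apply: eq_bigr => i iB; rewrite /alpha (subsetP BS i iB).
have main : forall n B, B \in bases -> (#|B :\: S| <= n)%N ->
    nu B = Some (\sum_(i in B) alpha i).
  elim=> [|n IH] B hB hn.
    by apply: baseS => //; rewrite -setD_eq0 -cards_eq0 -leqn0.
  case: (set_0Vmem (B :\: S)) => [e|[x]].
    by apply: baseS => //; rewrite -setD_eq0 e.
  rewrite inE => /andP [xS xB].
  have [pS hi] := p_spec B x hB xB xS.
  set y := p x in pS hi.
  have [yB hB'] := swap_ok B x y hB xB pS hi.
  have eB' : nu (B :\ x :|: [set y]) = Some (\sum_(i in B :\ x :|: [set y]) alpha i).
    by apply: (IH _ hB'); rewrite -ltnS swap_measure.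
  have [hBx xBx] : Bx x \in bases /\ x \in Bx x.
    rewrite /Bx; case: pickP => [B1 /andP [h1 h2] | none] //=.
    by have := none B; rewrite hB xB.
  have [yBx hC] := swap_ok (Bx x) x y hBx xBx pS hi.
  have yG : y \in G := subsetP SG y pS.
  have yB' : y \in B :\ x :|: [set y] by rewrite !inE eqxx orbT.
  have yC : y \in Bx x :\ x :|: [set y] by rewrite !inE eqxx orbT.
  have h1 := exch_forced M Hv hB' yB' hBx xBx yBx yG hi.
  have h2 := exch_forced M Hv hC yC hB xB yB yG hi.
  rewrite !swap_back // in h1 h2.
  have [b eb] := val_fin M Hv hB.
  have [a ea] := val_fin M Hv hBx.
  have [c ec] := val_fin M Hv hC.
  rewrite eb ea ec eB' /= in h1 h2.
  rewrite eb; congr Some.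
  rewrite (big_setD1 x xB) /=.
  rewrite setUC big_setU1 /= in h1 h2; last by rewrite !inE (negbTE yB) andbF.
  have ax : alpha x = alpha' y + a - c by rewrite /alpha (negbTE xS) /fin ea ec.
  have ay : alpha y = alpha' y by rewrite /alpha pS.
  rewrite ax; rewrite ay in h1 h2.
  lra.
by exists alpha => B hB; exact: main _ B hB (leqnn _).
Qed.
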